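(* Let $1\leq n\leq N$ and let $R_N$ be a rejective sampling design of size $n$ with canonical parameters $\mathbf{p}_N=(p_1,\ldots,p_N)\in(0,1)^N$, $\sum_{i=1}^Np_i=n$, and first-order inclusion probabilities $\pi_1,\ldots,\pi_N$. Let $d_N=\sum_{i=1}^Np_i(1-p_i)$ and suppose $d_N\geq1$. Then for all $i\in\{1,\ldots,N\}$, $$\left|\frac1{\pi_i}-\frac1{p_i}\right|\leq\frac{6}{d_N}\cdot\frac{1-\pi_i}{\pi_i}.$$
   Context: A rejective design of size $n$ on $\{1,\ldots,N\}$ with canonical parameters $\mathbf{p}_N$ (satisfying $\sum_ip_i=n$) is the distribution of a random subset $S$ with $\mathbb{P}(S=s)=C\prod_{i\in s}p_i\prod_{i\notin s}(1-p_i)$ if $\#s=n$ and $0$ otherwise, $C$ a normalizing constant; $\pi_i=\mathbb{P}(i\in S)$. *)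

(* Defs.v *)
From HB Require Import structures.
From mathcomp Require Import all_boot all_order all_algebra.
Set Implicit Arguments. Unset Strict Implicit. Unset Printing Implicit Defensive.
Import Order.TTheory GRing.Theory Num.Theory.
Local Open Scope ring_scope.

Definition rej_weight (R : realFieldType) (N : nat) (p : 'I_N -> R)
    (s : {set 'I_N}) : R :=
  (\prod_(i in s) p i) * (\prod_(i in ~: s) (1 - p i)).

Definition rej_prob (R : realFieldType) (N n : nat) (p : 'I_N -> R)
    (s : {set 'I_N}) : R :=
  if #|s| == n then
    rej_weight p s / (\sum_(t : {set 'I_N} | #|t| == n) rej_weight p t)
  else 0.

Definition rej_incl (R : realFieldType) (N n : nat) (p : 'I_N -> R)
    (i : 'I_N) : R :=
  \sum_(s : {set 'I_N} | i \in s) rej_prob n p s.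

Definition rej_dN (R : realFieldType) (N : nat) (p : 'I_N -> R) : R :=
  \sum_(i < N) p i * (1 - p i).

(* Main.v *)
Require Import Defs.
From HB Require Import structures.
From mathcomp Require Import all_boot all_order all_algebra.
From mathcomp Require Import ring lra.
Import Order.TTheory GRing.Theory Num.Theory.
Local Open Scope ring_scope.

Set Implicit Arguments. Unset Strict Implicit. Unset Printing Implicit Defensive.
Section PB.
Variables (R : realFieldType) (N : nat) (q : 'I_N -> R).

Definition wt (J T : {set 'I_N}) : R :=
  (\prod_(x in T) q x) * (\prod_(x in J :\: T) (1 - q x)).

Definition F (J : {set 'I_N}) (k : nat) : R :=
  \sum_(T : {set 'I_N} | (T \subset J) && (#|T| == k)) wt J T.

Lemma L1 (J : {set 'I_N}) j k : j \in J ->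
  q j * F (J :\ j) k =
  \sum_(T : {set 'I_N} | [&& T \subset J, #|T| == k.+1 & j \in T]) wt J T.
Proof.
move=> jJ; rewrite /F big_distrr /=; symmetry.
rewrite (reindex_onto (fun T => j |: T) (fun T => T :\ j)); last first.
  by move=> T; case/and3P => _ _ jT; rewrite setD1K.
symmetry; apply: eq_big => T.
  rewrite subsetD1 setU11 andbT.
  case jT: (j \in T) => /=.
    rewrite andbF /=; symmetry; apply/negbTE/negP => /andP[_ /eqP e].
    by move: jT; rewrite -{1}e !inE eqxx.
  rewrite setU1K ?(negbT jT) // eqxx andbT cardsU1 jT add1n eqSS.
  by rewrite subUset sub1set jJ andbT.
move=> /andP[]; rewrite subsetD1 => /andP[_ jT] _.
rewrite /wt big_setU1 //= mulrA.
congr (_ * _); apply: eq_bigl => x; rewrite !inE.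
by case: (x == j); case: (x \in T).
Qed.

Lemma L0 (J : {set 'I_N}) j k : j \in J ->
  (1 - q j) * F (J :\ j) k =
  \sum_(T : {set 'I_N} | [&& T \subset J, #|T| == k & j \notin T]) wt J T.
Proof.
move=> jJ; rewrite /F big_distrr /=.
apply: eq_big => T.
  by rewrite subsetD1; case: (T \subset J); case: (j \in T); case: (#|T| == k).
rewrite subsetD1 => /andP[/andP[TJ jT] _]; rewrite /wt.
have -> : J :\: T = j |: ((J :\ j) :\: T).
  apply/setP => x; rewrite !inE; case: eqP => [->|] //=.
  by rewrite jJ andbT.
rewrite [X in _ = _ * X]big_setU1 /=; last by rewrite !inE eqxx /= ?andbF.
by rewrite mulrCA.
Qed.

Lemma Fsplit (J : {set 'I_N}) j k :
  F J k = \sum_(T : {set 'I_N} | [&& T \subset J, #|T| == k & j \in T]) wt J T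
        + \sum_(T : {set 'I_N} | [&& T \subset J, #|T| == k & j \notin T]) wt J T.
Proof.
rewrite /F (bigID (fun T : {set 'I_N} => j \in T)) /=.
by congr (_ + _); apply: eq_bigl => T; rewrite andbA.
Qed.

Lemma Frec (J : {set 'I_N}) j k : j \in J ->
  F J k.+1 = q j * F (J :\ j) k + (1 - q j) * F (J :\ j) k.+1.
Proof. by move=> jJ; rewrite (Fsplit J j) L1 // L0. Qed.

Lemma Frec0 (J : {set 'I_N}) j : j \in J ->
  F J 0 = (1 - q j) * F (J :\ j) 0.
Proof.
move=> jJ; rewrite (Fsplit J j) L0 // big_pred0 ?add0r // => T.
apply/negbTE; apply/negP => /and3P[_ /eqP c jT].
by move: c; apply/eqP; rewrite -lt0n; apply/card_gt0P; exists j.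
Qed.

Lemma F_set0 k : F set0 k.+1 = 0.
Proof.
rewrite /F big_pred0 // => T; apply/negbTE; apply/negP => /andP[].
by rewrite subset0 => /eqP -> ; rewrite cards0.
Qed.

Lemma F_set00 : F set0 0 = 1.
Proof.
rewrite /F (big_pred1 set0) => [|T]; last first.
  by rewrite subset0 /=; case: eqP => [->|]; rewrite ?cards0 ?andbF.
by rewrite /wt setD0 !big_set0 mulr1.
Qed.

Hypothesis hq : forall x, 0 < q x < 1.

Lemma F_ge0 J k : 0 <= F J k.
Proof.
apply: sumr_ge0 => T _; apply: mulr_ge0; apply: prodr_ge0 => x _;
  have /andP[h1 h2] := hq x; lra.
Qed.

Lemma card_pick m (J : {set 'I_N}) : #|J| = m.+1 ->
  exists2 j, j \in J & #|J :\ j| = m.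
Proof.
move=> cJ; have /set0Pn[j jJ] : J != set0 by rewrite -card_gt0 cJ.
exists j => //; have := cardsD1 j J; rewrite jJ cJ add1n => /eqP.
by rewrite eqSS => /eqP.
Qed.

Lemma F_gt0 m : forall J : {set 'I_N}, #|J| = m -> forall k, (k <= m)%N -> 0 < F J k.
Proof.
elim: m => [|m IH] J cJ k km.
  move: km; rewrite leqn0 => /eqP ->.
  by move/cards0_eq: cJ => ->; rewrite F_set00 ltr01.
have [j jJ cJ'] := card_pick cJ.
have /andP[h1 h2] := hq j.
case: k km => [|k] km.
  rewrite (Frec0 jJ); have := IH _ cJ' 0 (leq0n _); nra.
rewrite (Frec _ jJ); have := IH _ cJ' k km; have := F_ge0 (J :\ j) k.+1; nra.
Qed.

Lemma PF2 m : forall J : {set 'I_N}, #|J| = m -> forall i j, (i <= j)%N ->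
  F J i * F J j.+2 <= F J i.+1 * F J j.+1.
Proof.
elim: m => [|m IH] J cJ i j ij.
  by move/cards0_eq: cJ => ->; rewrite !F_set0 mulr0 mul0r.
have [j0 jJ cJ'] := card_pick cJ.
have /andP[h1 h2] := hq j0.
have H := IH _ cJ'.
have f0 : forall k, 0 <= F (J :\ j0) k by move=> k; apply: F_ge0.
have hqq : 0 <= q j0 * q j0 by nra.
have hrr : 0 <= (1 - q j0) * (1 - q j0) by nra.
have hqr : 0 <= q j0 * (1 - q j0) by nra.
case: i ij => [|i] ij.
  rewrite (Frec0 jJ) !(Frec _ jJ).
  have a1 := H 0%N j ij.
  have a2 : 0 <= q j0 * q j0 * (F (J :\ j0) 0%N * F (J :\ j0) j) by apply: mulr_ge0 => //; apply: mulr_ge0.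
  have a3 : 0 <= q j0 * (1 - q j0) * (F (J :\ j0) 1%N * F (J :\ j0) j) by apply: mulr_ge0 => //; apply: mulr_ge0.
  have a4 := ler_wpM2l hrr a1.
  lra.
case: j ij => [|j] // ij.
rewrite !(Frec _ jJ).
have b1 := H i j ij.
have b2 := H i.+1 j.+1 ij.
have b3 : F (J :\ j0) i * F (J :\ j0) j.+3 <= F (J :\ j0) i.+2 * F (J :\ j0) j.+1.
  case: (ltnP i j) => ij'.
    have c1 := H i.+1 j ij'.
    have c2 := H i j.+1 (leqW ij).
    lra.
  have e : i = j by apply/eqP; rewrite eqn_leq ij' andbT.
  subst i; have := H j j.+1 (leqnSn j); lra.
have a2 := ler_wpM2l hqq b1.
have a3 := ler_wpM2l hrr b2.
have a4 := ler_wpM2l hqr b3.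
lra.
Qed.

Lemma R2 (J : {set 'I_N}) k : (k.+1)%:R * F J k.+1 = \sum_(j in J) q j * F (J :\ j) k.
Proof.
symmetry.
transitivity (\sum_(j in J) \sum_(T : {set 'I_N} | (T \subset J) && (#|T| == k.+1))
                 (if j \in T then wt J T else 0)).
  apply: eq_bigr => j jJ; rewrite (L1 _ jJ) -big_mkcondr.
  by apply: eq_bigl => T; rewrite andbA.
rewrite exchange_big /F big_distrr /=; apply: eq_bigr => T /andP[TJ /eqP cT].
rewrite -big_mkcondr /=.
rewrite (eq_bigl (fun j => j \in J :&: T)) => [|j]; last by rewrite inE.
by rewrite sumr_const (setIidPr TJ) cT mulr_natl.
Qed.

Lemma R3 (J : {set 'I_N}) k : (#|J| - k)%:R * F J k = \sum_(j in J) (1 - q j) * F (J :\ j) k.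
Proof.
symmetry.
transitivity (\sum_(j in J) \sum_(T : {set 'I_N} | (T \subset J) && (#|T| == k))
                 (if j \notin T then wt J T else 0)).
  apply: eq_bigr => j jJ; rewrite (L0 _ jJ) -big_mkcondr.
  by apply: eq_bigl => T; rewrite andbA.
rewrite exchange_big /F big_distrr /=; apply: eq_bigr => T /andP[TJ /eqP cT].
rewrite -big_mkcondr /=.
rewrite (eq_bigl (fun j => j \in J :\: T)) => [|j]; last by rewrite !inE andbC.
by rewrite sumr_const cardsD (setIidPr TJ) cT mulr_natl.
Qed.
End PB.

Lemma absU (R : realFieldType) (r q x : R) : 1 <= r -> 0 < q -> q < 1 -> 0 <= x ->
  x * (1 - q) <= r * q ->
  (r - 1) ^+ 2 / (2 * (r + 1) ^+ 2) * x + (r - 1) / r * (q * (1 - q))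
    <= (r * q / (r * q + (1 - q)) - q) + x * (r * q / (r * q + (1 - q))).
Proof.
move=> r1 q0 q1 x0 xle.
have r0 : 0 < r by lra.
have u0 : 0 < 1 - q by lra.
have D0 : 0 < r * q + (1 - q) by nra.
have rn : r != 0 by rewrite gt_eqF.
have Dn : r * q + (1 - q) != 0 by rewrite gt_eqF.
have r1n : r + 1 != 0 by rewrite gt_eqF //; lra.
have un : 1 - q != 0 by rewrite gt_eqF.
have e1 : r * q / (r * q + (1 - q)) - q - (r - 1) / r * (q * (1 - q))
          = q * (1 - q) ^+ 2 * (r - 1) ^+ 2 / (r * (r * q + (1 - q))).
  by field; rewrite rn Dn.
have t0 : 0 <= r * q / (r * q + (1 - q)) by apply: divr_ge0; nra.
have p0 : 0 <= q * (1 - q) ^+ 2 * (r - 1) ^+ 2 / (r * (r * q + (1 - q))).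
  apply: divr_ge0; last by nra.
  by apply: mulr_ge0; [apply: mulr_ge0; nra | nra].
case: (lerP (1 - q) (r * q)) => hu.
  have th : 1 / 2 <= r * q / (r * q + (1 - q)).
    by rewrite ler_pdivlMr //; lra.
  have k1 : (r - 1) ^+ 2 / (2 * (r + 1) ^+ 2) <= 1 / 2.
    rewrite ler_pdivrMr; last by nra.
    nra.
  have := ler_wpM2r x0 k1; have := ler_wpM2l x0 th; nra.
have hr : r <= (1 - q) * (r + 1) by nra.
have k0 : 0 <= (r - 1) ^+ 2 / (2 * (r + 1) ^+ 2) by apply: divr_ge0; nra.
have s1 : (r - 1) ^+ 2 / (2 * (r + 1) ^+ 2) * x
          <= (r - 1) ^+ 2 / (2 * (r + 1) ^+ 2) * (r * q / (1 - q)).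
  apply: ler_wpM2l => //; rewrite ler_pdivlMr //.
have e2 : q * (1 - q) ^+ 2 * (r - 1) ^+ 2 / (r * (r * q + (1 - q)))
          - (r - 1) ^+ 2 / (2 * (r + 1) ^+ 2) * (r * q / (1 - q))
          = q * (r - 1) ^+ 2 * (2 * (r + 1) ^+ 2 * (1 - q) ^+ 3 - r ^+ 2 * (r * q + (1 - q)))
            / (2 * r * (r * q + (1 - q)) * (r + 1) ^+ 2 * (1 - q)).
  by field; rewrite rn Dn r1n un.
have p2 : 0 <= q * (r - 1) ^+ 2 * (2 * (r + 1) ^+ 2 * (1 - q) ^+ 3 - r ^+ 2 * (r * q + (1 - q)))
            / (2 * r * (r * q + (1 - q)) * (r + 1) ^+ 2 * (1 - q)).
  apply: divr_ge0; last first.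
    apply: mulr_ge0; last lra.
    apply: mulr_ge0; last nra.
    apply: mulr_ge0; nra.
  apply: mulr_ge0; first by apply: mulr_ge0; [lra | exact: sqr_ge0].
  have h3 : r ^+ 2 <= ((1 - q) * (r + 1)) ^+ 2.
    by rewrite expr2 [X in _ <= X]expr2; apply: ler_pM; lra.
  have h4 : r * q + (1 - q) <= 2 * (1 - q) by lra.
  have h5 : r ^+ 2 * (r * q + (1 - q)) <= r ^+ 2 * (2 * (1 - q)).
    by apply: ler_wpM2l => //; nra.
  have h6 : r ^+ 2 * (1 - q) <= ((1 - q) * (r + 1)) ^+ 2 * (1 - q).
    by apply: ler_wpM2r => //; lra.
  rewrite subr_ge0; apply: (le_trans h5).
  have -> : 2 * (r + 1) ^+ 2 * (1 - q) ^+ 3 = 2 * (((1 - q) * (r + 1)) ^+ 2 * (1 - q)).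
    by ring.
  lra.
have := mulr_ge0 x0 t0.
lra.
Qed.

Lemma absL (R : realFieldType) (r q x : R) : 0 < r -> r <= 1 -> 0 < q -> q < 1 -> 0 <= x ->
  (r * q / (r * q + (1 - q)) - q) + x * (r * q / (r * q + (1 - q)))
    <= x - (1 - r) * (q * (1 - q)).
Proof.
move=> r0 r1 q0 q1 x0.
have D0 : 0 < r * q + (1 - q) by nra.
have Dn : r * q + (1 - q) != 0 by rewrite gt_eqF.
have D1 : r * q + (1 - q) <= 1 by nra.
have e1 : r * q / (r * q + (1 - q)) - q = - ((1 - r) * (q * (1 - q)) / (r * q + (1 - q))).
  by field.
have h1 : (1 - r) * (q * (1 - q)) <= (1 - r) * (q * (1 - q)) / (r * q + (1 - q)).
  rewrite ler_pdivlMr //.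
  have : 0 <= (1 - r) * (q * (1 - q)) by apply: mulr_ge0; nra.
  nra.
have t1 : r * q / (r * q + (1 - q)) <= 1 by rewrite ler_pdivrMr //; lra.
have := ler_wpM2l x0 t1.
lra.
Qed.

Lemma item_facts (R : realFieldType) (a b q A B C : R) : 0 < a -> 0 < b -> 0 < q -> q < 1 ->
  0 <= B -> a = q * B + (1 - q) * A -> b = q * A + (1 - q) * C -> B * C <= A * A ->
  [/\ 0 <= q * A / b + (1 - q) * A / a - 1,
      (q * A / b + (1 - q) * A / a - 1) * (1 - q) <= (a / b) * q &
      q * A / b - q = ((a / b) * q / ((a / b) * q + (1 - q)) - q)
                      + (q * A / b + (1 - q) * A / a - 1) * ((a / b) * q / ((a / b) * q + (1 - q)))].
Proof.
move=> a0 b0 q0 q1 B0 ea eb BC.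
have an : a != 0 by rewrite gt_eqF.
have bn : b != 0 by rewrite gt_eqF.
have ab0 : 0 < a / b by apply: divr_gt0.
have D0 : 0 < (a / b) * q + (1 - q) by nra.
have Dn : (a / b) * q + (1 - q) != 0 by rewrite gt_eqF.
have hA : (1 - q) * A <= a by nra.
split.
- have key : a * b <= A * (q * a + (1 - q) * b).
    have h : q * (1 - q) * (B * C) <= q * (1 - q) * (A * A) by apply: ler_wpM2l => //; nra.
    rewrite ea eb; nra.
  have -> : q * A / b + (1 - q) * A / a - 1 = (A * (q * a + (1 - q) * b) - a * b) / (a * b).
    by field; rewrite an bn.
  apply: divr_ge0; [lra | nra].
- have -> : (q * A / b + (1 - q) * A / a - 1) * (1 - q)
           = q / b * ((1 - q) * A) + (1 - q) / a * ((1 - q) * A) - (1 - q).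
    by field; rewrite an bn.
  have -> : a / b * q = q / b * a by field.
  have h1 : q / b * ((1 - q) * A) <= q / b * a by apply: ler_wpM2l => //; apply: divr_ge0; lra.
  have h2 : (1 - q) / a * ((1 - q) * A) <= (1 - q) / a * a by apply: ler_wpM2l => //; apply: divr_ge0; lra.
  have : (1 - q) / a * a = 1 - q by field.
  lra.
- field; rewrite an bn /= andbT.
  by apply: lt0r_neq0; nra.
Qed.

Lemma numU (R : realFieldType) (r d p s : R) : 1 <= d -> 1 <= r -> 0 < p -> p < 1 ->
  s = d - p * (1 - p) ->
  (r - 1) ^+ 2 / (2 * (r + 1) ^+ 2) + (r - 1) / r * s <= p -> r - 1 <= 6 / d.
Proof.
move=> d1 r1 p0 p1 es H.
have d0 : 0 < d by lra.
rewrite ler_pdivlMr //.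
rewrite leNgt; apply/negP => hed.
have [e er] : exists e, r = 1 + e by exists (r - 1); ring.
rewrite er in H hed r1.
have ee : 1 + e - 1 = e by ring.
rewrite ee in hed.
have e0 : 0 < e by nra.
have en : 1 + e != 0 by rewrite gt_eqF //; lra.
have k2 : (1 + e) * ((1 + e - 1) / (1 + e) * s - p) >= e * d - 1 - e.
  have -> : (1 + e) * ((1 + e - 1) / (1 + e) * s - p) = e * s - (1 + e) * p by field.
  rewrite es.
  have : 0 <= (1 - p) * (1 + e - e * p) by apply: mulr_ge0; nra.
  nra.
have k1 : 0 <= (1 + e - 1) ^+ 2 / (2 * (1 + e + 1) ^+ 2).
  by apply: divr_ge0; [exact: sqr_ge0 | nra].
case: (lerP (6 / 5) d) => hd.
  have : e * d - 1 - e > 0 by nra.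
  have : 0 < 1 + e by lra.
  nra.
have e5 : 5 < e by nra.
have k1' : 1 < (1 + e) * ((1 + e - 1) ^+ 2 / (2 * (1 + e + 1) ^+ 2)).
  have -> : (1 + e) * ((1 + e - 1) ^+ 2 / (2 * (1 + e + 1) ^+ 2))
            = (1 + e) * e ^+ 2 / (2 * (e + 2) ^+ 2).
    by field; apply: lt0r_neq0; nra.
  rewrite ltr_pdivlMr; nra.
have hX : 0 < (1 + e) * ((1 + e - 1) ^+ 2 / (2 * (1 + e + 1) ^+ 2)
                         + ((1 + e - 1) / (1 + e) * s - p)).
  rewrite mulrDr; nra.
have : 0 < (1 + e - 1) ^+ 2 / (2 * (1 + e + 1) ^+ 2) + ((1 + e - 1) / (1 + e) * s - p).
  by rewrite -(pmulr_rgt0 _ (_ : 0 < 1 + e)) //; lra.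
lra.
Qed.

Lemma numL (R : realFieldType) (r d p s : R) : 1 <= d -> r <= 1 -> 0 < p -> p < 1 ->
  s = d - p * (1 - p) -> p <= 1 - (1 - r) * s -> 1 - r <= 6 / d.
Proof.
move=> d1 r1 p0 p1 es H.
have d0 : 0 < d by lra.
rewrite ler_pdivlMr //.
rewrite leNgt; apply/negP => hed.
have : (1 - r) * (p * (1 - p)) <= 1 - r by nra.
rewrite es in H; nra.
Qed.

Unset Implicit Arguments.

Theorem mainTheorem6 (R : realFieldType) (N n : nat) (p : 'I_N -> R)
  (hn1 : (1 <= n)%N) (hnN : (n <= N)%N)
  (hp : forall i, 0 < p i < 1)
  (hsum : \sum_(i < N) p i = n%:R)
  (hd : 1 <= rej_dN p) :
  forall i : 'I_N,
    `| (rej_incl n p i)^-1 - (p i)^-1 |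
      <= 6 / rej_dN p * ((1 - rej_incl n p i) / rej_incl n p i).
Proof.
move=> i.
have hp0 j : 0 < p j by case/andP: (hp j).
have hp1 j : p j < 1 by case/andP: (hp j).
set J := [set: 'I_N] :\ i.
have sJ (f : 'I_N -> R) : \sum_(j < N) f j = f i + \sum_(j in J) f j.
  rewrite (bigD1 i) //=; congr (_ + _); apply: eq_bigl => j.
  by rewrite !inE andbT.
have cardJ : #|J| = N.-1.
  have h := cardsD1 i [set: 'I_N]; rewrite inE cardsT card_ord add1n in h.
  by transitivity (#|J|.+1).-1; [ | rewrite /J -h].
have nN : (n < N)%N.
  have h1 : 0 < \sum_(j < N) (1 - p j).
    rewrite sJ; apply: ltr_wpDr; first by apply: sumr_ge0 => j _; have := hp1 j; lra.
    by have := hp1 i; lra.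
  move: h1; rewrite sumrB hsum sumr_const card_ord subr_gt0 ltr_nat.
  by [].
have n2 : (1 < n)%N.
  have h1 : 0 < \sum_(j < N) p j * p j.
    rewrite sJ; apply: ltr_wpDr; first by apply: sumr_ge0 => j _; have := hp0 j; nra.
    by have := hp0 i; nra.
  have e : rej_dN p = \sum_(j < N) p j - \sum_(j < N) p j * p j.
    by rewrite /rej_dN -sumrB; apply: eq_bigr => j _; ring.
  have : 1 < n%:R :> R by rewrite -hsum; lra.
  by rewrite ltr1n.
move: hn1 hnN hsum nN n2; case: n => [|[|m]] //= _ hnN hsum nN _.
have sumJ : \sum_(j in J) p j = m.+2%:R - p i by rewrite -hsum sJ; ring.
have dJ : rej_dN p = p i * (1 - p i) + \sum_(j in J) p j * (1 - p j) by rewrite /rej_dN sJ.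
have mJ : (m.+2 <= #|J|)%N by rewrite cardJ; case: (N) nN => // N' /=.
set a := F p J m.+1.
set b := F p J m.+2.
have a0 : 0 < a by apply: (F_gt0 hp cardJ) => //; rewrite -cardJ ltnW.
have b0 : 0 < b by apply: (F_gt0 hp cardJ) => //; rewrite -cardJ.
set A := fun j => F p (J :\ j) m.+1.
have Hitem : forall j, j \in J ->
  [/\ 0 <= p j * A j / b + (1 - p j) * A j / a - 1,
      (p j * A j / b + (1 - p j) * A j / a - 1) * (1 - p j) <= (a / b) * p j &
      p j * A j / b - p j = ((a / b) * p j / ((a / b) * p j + (1 - p j)) - p j)
        + (p j * A j / b + (1 - p j) * A j / a - 1) * ((a / b) * p j / ((a / b) * p j + (1 - p j)))].
  move=> j jJ.
  have cJj : #|J :\ j| = N.-1.-1.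
    have h := cardsD1 j J; rewrite jJ add1n cardJ in h.
    by rewrite h.
  apply: (item_facts (B := F p (J :\ j) m) (C := F p (J :\ j) m.+2)) => //.
  - exact: F_ge0.
  - exact: Frec.
  - exact: Frec.
  - exact: (PF2 hp cJj).
have hR2 : \sum_(j in J) p j * A j = m.+2%:R * b by rewrite (R2 p J m.+1).
have hR3 : \sum_(j in J) (1 - p j) * A j = (#|J| - m.+1)%:R * a by rewrite (R3 p J m.+1).
have SPhi : \sum_(j in J) (p j * A j / b - p j) = p i.
  rewrite sumrB -mulr_suml hR2 sumJ mulfK ?gt_eqF //; ring.
have SPsi : \sum_(j in J) (p j * A j / b + (1 - p j) * A j / a - 1) = 1.
  rewrite sumrB big_split /= -!mulr_suml hR2 hR3 sumr_const.
  rewrite mulfK ?gt_eqF // mulfK ?gt_eqF // natrB; last by apply: ltnW.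
  ring.
have rho0 : 0 < a / b by apply: divr_gt0.
have key : `|1 - a / b| <= 6 / rej_dN p.
  case: (lerP 1 (a / b)) => hr.
    apply: (numU (p := p i) (s := \sum_(j in J) p j * (1 - p j))) => //.
    - by rewrite dJ; ring.
    have : \sum_(j in J) ((a / b - 1) ^+ 2 / (2 * (a / b + 1) ^+ 2) * (p j * A j / b + (1 - p j) * A j / a - 1)
              + (a / b - 1) / (a / b) * (p j * (1 - p j)))
           <= \sum_(j in J) (p j * A j / b - p j).
      apply: ler_sum => j jJ.
      have [x0 xle ->] := Hitem j jJ.
      exact: absU.
    by rewrite SPhi big_split /= -!mulr_sumr SPsi mulr1.
  apply: (numL (p := p i) (s := \sum_(j in J) p j * (1 - p j))) => //.
  - exact: ltW.
  - by rewrite dJ; ring.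
  have : \sum_(j in J) (p j * A j / b - p j)
         <= \sum_(j in J) ((p j * A j / b + (1 - p j) * A j / a - 1) - (1 - a / b) * (p j * (1 - p j))).
    apply: ler_sum => j jJ.
    have [x0 xle ->] := Hitem j jJ.
    by apply: absL => //; apply: ltW.
  by rewrite SPhi sumrB SPsi -mulr_sumr.
have Zeq : \sum_(t : {set 'I_N} | #|t| == m.+2) rej_weight p t = p i * a + (1 - p i) * b.
  transitivity (F p [set: 'I_N] m.+2).
    rewrite /F; apply: eq_big => t; first by rewrite subsetT.
    by move=> _; rewrite /rej_weight /wt setTD.
  by rewrite (Frec p m.+1 (_ : i \in [set: 'I_N])) // inE.
have incl : rej_incl m.+2 p i = p i * a / (p i * a + (1 - p i) * b).
  rewrite /rej_incl /rej_prob Zeq -big_mkcondr -mulr_suml.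
  congr (_ / _).
  rewrite (L1 p m.+1 (_ : i \in [set: 'I_N])) ?inE //.
  apply: eq_big => t; first by rewrite subsetT andbC.
  by move=> _; rewrite /rej_weight /wt setTD.
have Z0 : 0 < p i * a + (1 - p i) * b.
  have := hp0 i; have := hp1 i; nra.
have pa0 : 0 < p i * a by apply: mulr_gt0.
rewrite incl.
have e1 : (p i * a / (p i * a + (1 - p i) * b))^-1 - (p i)^-1
          = (1 - p i) / (p i * a) * (b - a).
  by field; rewrite !gt_eqF.
have e2 : (1 - p i * a / (p i * a + (1 - p i) * b)) / (p i * a / (p i * a + (1 - p i) * b))
          = (1 - p i) / (p i * a) * b.
  by field; rewrite !gt_eqF.
rewrite e1 e2 normrM ger0_norm; last first.
  by apply: divr_ge0; [have := hp1 i; lra | apply: ltW].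
rewrite mulrCA; apply: ler_wpM2l.
  by apply: divr_ge0; [have := hp1 i; lra | apply: ltW].
have -> : b - a = b * (1 - a / b) by field; rewrite gt_eqF.
rewrite normrM (ger0_norm (ltW b0)) mulrC.
by apply: ler_wpM2r => //; apply: ltW.
Qed.
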